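(* Let $\Delta$ be a positive integer and let $f\colon\mathbb{N}\to\mathbb{R}$ be a superlinear function with $f(r)\geq \Delta r+1$ for all $r\in\mathbb{N}$. Then every finite graph $G$ with maximum degree $\Delta$ has a uniform subdivision $\tilde G$ with growth $f_{\tilde G}(r)\leq f(r)$ for every positive integer $r$.
   Context: $\mathbb{N}$ is the set of positive integers. A function $f\colon\mathbb{N}\to\mathbb{R}$ is superlinear if $f(x)/x\to\infty$ as $x\to\infty$. The growth of a finite graph $G$ is the function $f_G\colon\mathbb{N}\to\mathbb{N}$ where $f_G(r)$ is the maximum of $|V(H)|$ over all subgraphs $H$ of $G$ of radius at most $r$. A subdivision of $G$ is a graph obtained by replacing each edge $vw$ by a path $P_{vw}$ with endpoints $v$ and $w$, internally disjoint from the rest of the graph; it is uniform if all the paths $P_{vw}$ have the same length. *)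

(* Defs.v *)
From HB Require Import structures.
From mathcomp Require Import all_boot all_order all_algebra.
From mathcomp Require Import reals.
Set Implicit Arguments. Unset Strict Implicit. Unset Printing Implicit Defensive.
Import Order.TTheory GRing.Theory Num.Theory.

Definition simple_graph (V : finType) (e : rel V) :=
  symmetric e /\ irreflexive e.

Definition degree (V : finType) (e : rel V) (v : V) : nat := #|[set w | e v w]|.
Definition max_degree (V : finType) (e : rel V) : nat := \max_(v : V) degree e v.

Fixpoint reach (V : finType) (F : {set V * V}) (r : nat) (x y : V) : bool :=
  match r with
  | 0 => x == y
  | r'.+1 => reach F r' x y || [exists z, ((x, z) \in F) && reach F r' z y]
  end.

Definition is_subgraph (V : finType) (e : rel V) (S : {set V}) (F : {set V * V}) : bool :=
  [forall p : V * V, (p \in F) ==>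
     [&& e p.1 p.2, p.1 \in S, p.2 \in S & ((p.2, p.1) \in F)]].

(* the subgraph (S, F) has radius at most r: some centre c in S reaches every
   vertex of S within distance r inside (S, F) (this forces connectedness
   and nonemptiness). *)
Definition radius_le (V : finType) (S : {set V}) (F : {set V * V}) (r : nat) : bool :=
  [exists c in S, [forall x in S, reach F r c x]].

Definition growth (V : finType) (e : rel V) (r : nat) : nat :=
  \max_(S : {set V}) \max_(F : {set V * V} | is_subgraph e S F && radius_le S F r) #|S|.

(* The uniform subdivision of (T, e) in which every edge uv is replaced by a
   path of length k (k >= 1; k = 1 gives the graph itself).
   Vertices: original vertices inl v, and internal vertices inr (u, v, i) for
   each edge uv (listed once, with rank u < rank v) and 1 <= i <= k-1;
   the vertex inr (u,v,i) sits at position i on the path u = pos 0, ..., v = pos k. *)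
Section Subdivision.
Variables (T : finType) (e : rel T) (k : nat).

Definition sd_edge (u v : T) : bool := e u v && (enum_rank u < enum_rank v)%N.

Definition sd_valid (x : T + (T * T * 'I_k)) : bool :=
  match x with
  | inl _ => true
  | inr (u, v, i) => sd_edge u v && (0 < i)%N
  end.

Definition sd_vertex := {x : T + (T * T * 'I_k) | sd_valid x}.

Definition sd_pos (u v : T) (x : T + (T * T * 'I_k)) : option nat :=
  match x with
  | inl w => if w == u then Some 0%N else if w == v then Some k else None
  | inr (u', v', i) => if (u' == u) && (v' == v) then Some (nat_of_ord i) else None
  end.

Definition sd_adj (x y : sd_vertex) : bool :=
  [exists u : T, exists v : T, sd_edge u v &&
     match sd_pos u v (val x), sd_pos u v (val y) with
     | Some p, Some q => (p.+1 == q) || (q.+1 == p)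
     | _, _ => false
     end].
End Subdivision.

Local Open Scope ring_scope.
Definition superlinear (R : realType) (f : nat -> R) : Prop :=
  forall M : R, exists N : nat, forall x : nat, (N <= x)%N -> (0 < x)%N ->
    M <= f x / x%:R.

(* Main.v *)
Require Import Defs.
From HB Require Import structures.
From mathcomp Require Import all_boot all_order all_algebra.
From mathcomp Require Import reals.
Import Order.TTheory GRing.Theory Num.Theory.
From mathcomp Require Import zify.
Set Implicit Arguments. Unset Strict Implicit. Unset Printing Implicit Defensive.

Lemma reach_pot (W : finType) (F : {set W * W}) (phi : W -> nat) :
  (forall x z, (x, z) \in F -> phi z <= (phi x).+1) ->
  forall r x y, reach F r x y -> phi y <= phi x + r.
Proof.
move=> H; elim=> [|r IH] x y /=; first by move/eqP->; rewrite addn0.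
case/orP; first by move/IH; rewrite addnS => /leqW.
case/existsP=> z /andP[Hxz Hr]; have := IH _ _ Hr; have := H _ _ Hxz; lia.
Qed.

Lemma reach_closed (W : finType) (F : {set W * W}) (P : pred W) :
  (forall x z, (x, z) \in F -> P x -> P z) ->
  forall r x y, reach F r x y -> P x -> P y.
Proof.
move=> H; elim=> [|r IH] x y /=; first by move/eqP->.
case/orP; first by move/IH.
case/existsP=> z /andP[Hxz Hr] Px; exact: (IH _ _ Hr (H _ _ Hxz Px)).
Qed.

Lemma card_range n a b : #|[set j : 'I_n | a <= j <= b]| <= b.+1 - a.
Proof.
rewrite cardE -(size_map val) -(size_iota a (b.+1 - a)).
apply: uniq_leq_size; first by rewrite (map_inj_uniq val_inj) enum_uniq.
move=> x /mapP[j]; rewrite mem_enum inE => /andP[h1 h2] ->.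
rewrite mem_iota /=; move: h1 h2; case: j => j hj /=; lia.
Qed.

Lemma growth_le (V : finType) (e : rel V) r B :
  (forall S F, is_subgraph e S F -> radius_le S F r -> #|S| <= B) ->
  growth e r <= B.
Proof.
move=> H; rewrite /growth; apply/bigmax_leqP => S _; apply/bigmax_leqP => F /andP[h1 h2].
exact: H h1 h2.
Qed.

Lemma subgraph_edge (V : finType) (e : rel V) S F x z :
  is_subgraph e S F -> (x, z) \in F -> e x z.
Proof. by move=> /forallP /(_ (x, z)) /implyP H /H /and4P[]. Qed.

Section Sd.
Variables (T : finType) (e : rel T) (k : nat).
Hypothesis He : simple_graph e.
Local Notation V := (sd_vertex e k).

Lemma sd_edge_neq u v : sd_edge e u v -> u != v.
Proof. by case/andP=> _; apply: contraTneq => ->; rewrite ltnn. Qed.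

Lemma sd_edge_asym u v : sd_edge e u v -> sd_edge e v u -> False.
Proof. by case/andP=> _ h1 /andP[_ h2]; move: (ltn_trans h1 h2); rewrite ltnn. Qed.

Lemma sd_edge_e u v : sd_edge e u v -> e u v.
Proof. by case/andP. Qed.

Lemma e_sym u v : e u v -> e v u.
Proof. by case: He => hs _; rewrite hs. Qed.

Lemma pos_le (u v : T) (x : T + (T * T * 'I_k)) p : sd_pos u v x = Some p -> p <= k.
Proof.
case: x => [x|[[a b] j]] /=.
  by case: eqP => _; [case=> <-|case: eqP => _ // [<-]].
by case: ifP => // _ [<-]; exact: ltnW.
Qed.

Lemma pos_inl (u v x : T) p : sd_pos (k:=k) u v (inl x) = Some p -> (x = u /\ p = 0) \/ (x = v /\ p = k).
Proof. by rewrite /=; case: eqP => [->|_] [] //; [left | case: eqP => [->|] // [] <-; right]. Qed.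

Lemma pos_inr (u v a b : T) (j : 'I_k) p : sd_pos u v (inr (a, b, j)) = Some p -> [/\ a = u, b = v & p = j].
Proof. by rewrite /=; case: ifP => // /andP[/eqP -> /eqP ->] [<-]. Qed.

Lemma pos_inj u v (x y : V) p : 0 < k -> sd_edge e u v ->
  sd_pos u v (val x) = Some p -> sd_pos u v (val y) = Some p -> x = y.
Proof.
move=> k0 Huv Hx Hy; apply: val_inj.
case: x Hx => [[x|[[a b] j]] /= vx] Hx; case: y Hy => [[y|[[a' b'] j']] /= vy] Hy.
- case/pos_inl: Hx => [[? ?]|[? ?]]; case/pos_inl: Hy => [[? ?]|[? ?]]; subst => //; lia.
- case/pos_inr: Hy => ? ? ?; subst; move: vy => /andP[_]; have := ltn_ord j'.
  case/pos_inl: Hx => [[? ?]|[? ?]]; lia.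
- case/pos_inr: Hx => ? ? ?; subst; move: vx => /andP[_]; have := ltn_ord j.
  case/pos_inl: Hy => [[? ?]|[? ?]]; lia.
- case/pos_inr: Hx => ? ? ?; case/pos_inr: Hy => ? ? ?; subst.
  by congr (inr (_, _, _)); apply: val_inj.
Qed.

Definition aw (w : T) (x : V) : nat :=
  match val x with
  | inl x0 => if x0 == w then 0 else if e w x0 then k else k.+1
  | inr (a, b, j) => if a == w then nat_of_ord j else if b == w then k - j else k.+1
  end.

Lemma aw_pos w u v (x : V) p : sd_edge e u v -> sd_pos u v (val x) = Some p ->
  [/\ w = u -> aw w x = p, w = v -> aw w x = k - p & w != u -> w != v -> k <= aw w x <= k.+1].
Proof.
move=> Huv; have nuv := sd_edge_neq Huv; have euv := sd_edge_e Huv.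
have evu := e_sym euv.
case: x => [[x0|[[a b] j]] vx] /= Hp; rewrite /aw /=.
- case/pos_inl: Hp => [[-> ->]|[-> ->]]; split => [->|->|].
  + by rewrite eqxx.
  + by rewrite (negbTE nuv) evu subn0.
  + by move=> h1 h2; rewrite [u == w]eq_sym (negbTE h1); case: (e w u) => /=; lia.
  + by rewrite [v == u]eq_sym (negbTE nuv) euv.
  + by rewrite eqxx subnn.
  + by move=> h1 h2; rewrite [v == w]eq_sym (negbTE h2); case: (e w v) => /=; lia.
- case/pos_inr: Hp => -> -> ->; split => [->|->|].
  + by rewrite eqxx.
  + by rewrite (negbTE nuv) eqxx.
  + by move=> h1 h2; rewrite [u == w]eq_sym (negbTE h1) [v == w]eq_sym (negbTE h2); lia.
Qed.

Lemma aw_lip w (x y : V) : sd_adj x y -> aw w y <= (aw w x).+1.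
Proof.
case/existsP=> u /existsP[v /andP[Huv H]].
case Ex: (sd_pos u v (val x)) H => [p|] //; case Ey: (sd_pos u v (val y)) => [q|] // H.
have px := pos_le Ex; have py := pos_le Ey.
have [ax1 ax2 ax3] := aw_pos w Huv Ex; have [ay1 ay2 ay3] := aw_pos w Huv Ey.
have [Ewu|nu] := eqVneq w u; first by rewrite ax1 // ay1 //; lia.
have [Ewv|nv] := eqVneq w v; first by rewrite ax2 // ay2 //; lia.
by move: (ax3 nu nv) (ay3 nu nv); lia.
Qed.


Definition armg (w : T) (y : V) : option T * 'I_k.+1 :=
  match val y with
  | inl _ => (None, ord0)
  | inr (a, b, j) => if a == w then (Some b, inord j) else (Some a, inord (k - j))
  end.

Lemma inord_eqk (m n : nat) : inord m = inord n :> 'I_k.+1 -> m <= k -> n <= k -> m = n.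
Proof. by move=> /(congr1 val) /= + hm hn; rewrite !inordK ?ltnS. Qed.

Lemma armg_inj w m : m < k -> {in [set y : V | aw w y <= m] &, injective (armg w)}.
Proof.
move=> mk [[y1|[[a b] j]] v1] [[y2|[[a' b'] j']] v2]; rewrite !inE /aw /armg /=.
- move=> h1 h2 _; apply: val_inj => /=.
  move: h1 h2; case: eqP => [->|_]; last by case: (e w y1) => /=; lia.
  case: eqP => [->|_] //; by case: (e w y2) => /=; lia.
- by move=> _ _; case: ifP.
- by move=> _ _; case: ifP.
- have hj := ltn_ord j; have hj' := ltn_ord j'.
  case: (a =P w) => Ha; case: (a' =P w) => Ha' => h1 h2 [] E1 E2; move/inord_eqk: E2 => E2.
  + have Ej : j = j' by apply: val_inj; apply: E2; lia.
    by apply: val_inj => /=; rewrite Ha Ha' E1 Ej.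
  + move: h2; case: eqP => [Eb|_]; last lia.
    move=> _; exfalso; move: v1 v2 => /andP[h1' _] /andP[h2' _].
    by apply: (sd_edge_asym h1'); rewrite E1 Ha -Eb.
  + move: h1; case: eqP => [Eb|_]; last lia.
    move=> _; exfalso; move: v1 v2 => /andP[h1' _] /andP[h2' _].
    by apply: (sd_edge_asym h1'); rewrite E1 Eb -Ha'.
  + move: h1 h2; case: eqP => [Eb|_]; last lia.
    case: eqP => [Eb'|_]; last lia.
    move=> _ _; have Ej : j = j'.
      by apply: val_inj => /=; have := E2 (leq_subr _ _) (leq_subr _ _); lia.
    by apply: val_inj => /=; rewrite E1 Eb Eb' Ej.
Qed.


Lemma armg_spec w m (y : V) : m < k -> aw w y <= m -> val y != inl w ->
  exists b (j : 'I_k.+1), [/\ armg w y = (Some b, j), e w b, 0 < j <= m &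
     exists i : 'I_k, val y = inr (w, b, i) \/ val y = inr (b, w, i)].
Proof.
move=> mk; case: y => [[y0|[[a b] j]] vy]; rewrite /aw /armg /=.
  case: eqP => [->|_]; first by rewrite eqxx.
  by case: (e w y0) => /=; lia.
move: vy => /= /andP[/andP[eab _] j0]; have hj := ltn_ord j.
case: (a =P w) => [Ea|Na].
  move=> hm _; exists b, (inord j); split => //; first by rewrite -Ea.
    by rewrite inordK; lia.
  by exists j; left; rewrite Ea.
case: (b =P w) => [Eb|Nb]; last lia.
move=> hm _; exists a, (inord (k - j)); split => //.
- by rewrite -Eb; apply: e_sym.
- by rewrite inordK; lia.
- by exists j; right; rewrite Eb.
Qed.


Lemma card_arms (w : T) (N : {set T}) m :
  #|[set (Some p.1, p.2) | p in setX N [set j : 'I_k.+1 | 1 <= j <= m]]| <= #|N| * m.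
Proof.
apply: leq_trans (leq_imset_card _ _) _; rewrite cardsX leq_mul2l.
by apply/orP; right; have := card_range k.+1 1 m; rewrite subn1.
Qed.

Lemma ball_inl w r : r < k -> #|[set y : V | aw w y <= r]| <= (degree e w) * r + 1.
Proof.
move=> rk; set A := [set y : V | aw w y <= r].
set N := [set b | e w b]; set J := [set j : 'I_k.+1 | 1 <= j <= r].
have sub : armg w @: A \subset (None, ord0) |: [set (Some p.1, p.2) | p in setX N J].
  apply/subsetP => _ /imsetP[y yA ->]; case: (eqVneq (val y) (inl w)) => [E|NE].
    by rewrite /armg E setU11.
  have hy : aw w y <= r by move: yA; rewrite inE.
  have [b [j [Ha eb hj _]]] := armg_spec rk hy NE.
  rewrite Ha; apply/setU1P; right; apply/imsetP; exists (b, j) => //.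
  by rewrite inE /= !inE eb.
rewrite -(card_in_imset (armg_inj rk)).
apply: leq_trans (subset_leq_card sub) _.
rewrite cardsU1 addnC leq_add //; first exact: card_arms.
by case: (_ \notin _).
Qed.



Lemma adj_path u v (x y : V) p : 2 <= k -> sd_edge e u v -> sd_adj x y ->
  sd_pos u v (val x) = Some p ->
  match sd_pos u v (val y) with
  | Some q => (p.+1 == q) || (q.+1 == p)
  | None => (p == 0) || (p == k) end.
Proof.
move=> k2 Huv /existsP[u' /existsP[v' /andP[Huv' H]]] Ex.
case Ex': (sd_pos u' v' (val x)) H => [p'|] //.
case Ey': (sd_pos u' v' (val y)) => [q'|] // H.
case: x Ex Ex' => [[x0|[[a b] j]] vx] /= Ex Ex'.
- case Ey: (sd_pos u v (val y)) => [q|]; last first.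
    by case/pos_inl: Ex => [[_ ->]|[_ ->]]; rewrite eqxx ?orbT.
  case: y Ey Ey' => [[y0|[[a b] j]] vy] /= Ey Ey'.
  + by case/pos_inl: Ex' => [[_ ?]|[_ ?]]; case/pos_inl: Ey' => [[_ ?]|[_ ?]]; subst; move: H; lia.
  + case/pos_inr: Ey => ? ? ?; case/pos_inr: Ey' => ? ? ?; subst.
    by rewrite Ex in Ex'; case: Ex' => ->.
- case/pos_inr: Ex => ? ? ?; case/pos_inr: Ex' => ? ? ?; subst.
  by rewrite Ey'.
Qed.

Definition pd u v (i : nat) (y : V) : nat :=
  match sd_pos u v (val y) with Some p => (p - i) + (i - p) | None => k end.

Definition D u v (i : nat) (y : V) : nat :=
  minn (minn (i + aw u y) (k - i + aw v y)) (pd u v i y).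

Lemma pd_le u v i y : i <= k -> pd u v i y <= k.
Proof.
rewrite /pd; case E: (sd_pos _ _ _) => [q|] // ik.
by have := pos_le E; lia.
Qed.

Lemma D_lip u v i (x y : V) : 2 <= k -> i <= k -> sd_edge e u v -> sd_adj x y ->
  D u v i y <= (D u v i x).+1.
Proof.
move=> k2 ik Huv Hxy.
have h1 : D u v i y <= i + aw u y by rewrite /D; lia.
have h1' : D u v i y <= k - i + aw v y by rewrite /D; lia.
have h3 : D u v i y <= pd u v i y by rewrite /D; lia.
have lu := aw_lip u Hxy; have lv := aw_lip v Hxy.
rewrite /D -!minnSS !leq_min -!andbA; apply/and3P; split.
- by apply: leq_trans h1 _; lia.
- by apply: leq_trans h1' _; lia.
rewrite {2}/pd; case Ex: (sd_pos u v (val x)) => [p|]; last first.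
  by apply: leq_trans h3 _; apply: leqW; apply: pd_le.
have := adj_path k2 Huv Hxy Ex; have px := pos_le Ex.
case Ey: (sd_pos u v (val y)) => [q|].
  by move=> H; apply: leq_trans h3 _; rewrite /pd Ey; move: H; lia.
have [a1 a2 _] := aw_pos u Huv Ex; have [b1 b2 _] := aw_pos v Huv Ex.
case/orP=> /eqP Ep; subst p.
- by move: (a1 erefl) lu h1; lia.
- by move: (b2 erefl) lv h1'; lia.
Qed.


Definition gmap u v w (y : V) : option T * 'I_k.+1 :=
  match sd_pos u v (val y) with Some p => (None, inord p) | None => armg w y end.

Lemma count_gen u v w w' a b m (A : {set V}) : sd_edge e u v -> 0 < k -> m < k ->
  ((w = u /\ w' = v) \/ (w = v /\ w' = u)) ->
  (forall y, y \in A -> match sd_pos u v (val y) with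
     Some p => a <= p <= b | None => aw w y <= m end) ->
  #|A| <= (b.+1 - a) + (degree e w).-1 * m.
Proof.
move=> Huv k0 mk Hw HA.
have euv := sd_edge_e Huv; have evu := e_sym euv.
have ew : e w w' by case: Hw => [][-> ->].
have notinl (y : V) : sd_pos u v (val y) = None -> val y != inl w.
  move=> H; apply/eqP => E; move: H; rewrite E.
  by case: Hw => [][-> _] /=; [rewrite eqxx | case: eqP => //; rewrite eqxx].
set N := [set c | e w c]; set J := [set j : 'I_k.+1 | 1 <= j <= m].
set P := [set p : 'I_k.+1 | a <= p <= b].
have inj : {in A &, injective (gmap u v w)}.
  move=> y1 y2 H1 H2; rewrite /gmap.
  case E1: (sd_pos u v (val y1)) => [p1|]; case E2: (sd_pos u v (val y2)) => [p2|].
  - case=> /inord_eqk E; have := E (pos_le E1) (pos_le E2) => ?; subst.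
    exact: pos_inj k0 Huv E1 E2.
  - have h2 := HA _ H2; rewrite E2 in h2.
    by have [c [j [-> _ _ _]]] := armg_spec mk h2 (notinl _ E2).
  - have h1 := HA _ H1; rewrite E1 in h1.
    by have [c [j [-> _ _ _]]] := armg_spec mk h1 (notinl _ E1).
  - have h1 := HA _ H1; have h2 := HA _ H2; rewrite E1 in h1; rewrite E2 in h2.
    by apply: (armg_inj mk); rewrite inE.
have sub : gmap u v w @: A \subset
    [set (None, p) | p in P] :|: [set (Some q.1, q.2) | q in setX (N :\ w') J].
  apply/subsetP => _ /imsetP[y yA ->]; have hy := HA _ yA; rewrite /gmap.
  case E: (sd_pos u v (val y)) hy => [p|] hy.
    apply/setUP; left; apply/imsetP; exists (inord p) => //.
    by rewrite inE inordK // ltnS (pos_le E).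
  have [c [j [-> ec hj [i0 Ey]]]] := armg_spec mk hy (notinl _ E).
  apply/setUP; right; apply/imsetP; exists (c, j) => //.
  rewrite inE /= !inE ec hj !andbT.
  apply/eqP => Ecw; subst c; have vy := valP y.
  case: Hw => [][? ?]; subst; case: Ey => Ey; rewrite Ey in E vy;
    try by rewrite /= !eqxx in E.
  all: try by move: vy; rewrite /sd_valid => /andP[h _]; exact: sd_edge_asym Huv h.
rewrite -(card_in_imset inj); apply: leq_trans (subset_leq_card sub) _.
apply: leq_trans (leq_card_setU _ _) _; apply: leq_add.
  apply: leq_trans (leq_imset_card _ _) _; exact: card_range.
apply: leq_trans (card_arms w _ _) _; rewrite leq_mul2r; apply/orP; right.
by rewrite /degree -/N [#|N|](cardsD1 w') inE ew.
Qed.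


Lemma arith d r s : 2 <= d -> s <= r -> s + r + d.-1 * (r - s) <= d * r.
Proof.
move=> d2 sr; rewrite -(subnK sr); set t := r - s.
case: d d2 => [|[|d]] // _ /=; rewrite addnK; nia.
Qed.

Lemma ball_int u v (i r Dl : nat) : sd_edge e u v -> 0 < i < k -> 2 * r < k ->
  degree e u <= Dl -> degree e v <= Dl -> 2 <= Dl ->
  #|[set y : V | D u v i y <= r]| <= Dl * r + 1.
Proof.
move=> Huv /andP[i0 ik] r2k du dv d2.
have k0 : 0 < k by lia.
have [sr|sr] := leqP (k - i) r.
  have H := @count_gen u v v u (i - r) k (r - (k - i)) [set y : V | D u v i y <= r] Huv k0.
  have {H} H := H ltac:(lia) (or_intror (conj erefl erefl)).
  apply: leq_trans (H _) _.
    move=> y; rewrite inE /D /pd; case E: (sd_pos u v (val y)) => [p|].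
      have pk := pos_le E.
      have [a1 _ _] := aw_pos u Huv E; have [_ b2 _] := aw_pos v Huv E.
      rewrite (a1 erefl) (b2 erefl); lia.
    lia.
  have := arith d2 sr; have : (degree e v).-1 * (r - (k - i)) <= Dl.-1 * (r - (k - i)).
    by rewrite leq_mul2r; apply/orP; right; lia.
  lia.
have H := @count_gen u v u v (i - r) (i + r) (r - i) [set y : V | D u v i y <= r] Huv k0.
have {H} H := H ltac:(lia) (or_introl (conj erefl erefl)).
apply: leq_trans (H _) _.
  move=> y; rewrite inE /D /pd; case E: (sd_pos u v (val y)) => [p|].
    have pk := pos_le E.
    have [a1 _ _] := aw_pos u Huv E; have [_ b2 _] := aw_pos v Huv E.
    rewrite (a1 erefl) (b2 erefl); lia.
  lia.
have : (degree e u).-1 * (r - i) <= Dl.-1 * (r - i).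
  by rewrite leq_mul2r; apply/orP; right; lia.
have [ir|ir] := leqP i r.
  have := arith d2 ir; lia.
have -> : r - i = 0 by lia.
rewrite !muln0; nia.
Qed.


Lemma centre_reach (S : {set V}) (F : {set V * V}) r : radius_le S F r ->
  exists2 c, c \in S & forall x, x \in S -> reach F r c x.
Proof.
case/existsP=> c /andP[cS /forallP H]; exists c => // x xS.
by move/implyP: (H x); apply.
Qed.

Lemma growth_small r Dl : 0 < r -> 2 * r < k -> max_degree e = Dl -> 2 <= Dl ->
  growth (@sd_adj T e k) r <= Dl * r + 1.
Proof.
move=> r0 r2k HD d2; apply: growth_le => S F Hsub /centre_reach[c cS Hc].
have Fadj x z : (x, z) \in F -> sd_adj x z by apply: subgraph_edge Hsub.
have degle w : degree e w <= Dl by rewrite -HD; exact: (leq_bigmax (F := degree e) w).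
case: c cS Hc => [[w|[[u v] i]] vc] cS Hc.
- apply: (leq_trans (n := #|[set y : V | aw w y <= r]|)).
    apply: subset_leq_card; apply/subsetP => x xS; rewrite inE.
    have := reach_pot (phi := aw w) _ (Hc x xS).
    by rewrite /aw /= eqxx add0n; apply => y z /Fadj; apply: aw_lip.
  apply: leq_trans (ball_inl w _) _; first by lia.
  by rewrite leq_add2r leq_mul2r degle orbT.
- move: (vc) => /= /andP[Huv i0]; have ik := ltn_ord i.
  apply: leq_trans (ball_int (i := i) (r := r) Huv _ r2k (degle u) (degle v) d2); last first.
    by rewrite i0.
  apply: subset_leq_card; apply/subsetP => x xS; rewrite inE.
  have := reach_pot (phi := D u v i) _ (Hc x xS).
  have -> : D u v i (exist (fun x0 : T + T * T * 'I_k => sd_valid e x0) (inr (u, v, i)) vc) = 0.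
    by rewrite /D /pd /= !eqxx /=; lia.
  by rewrite add0n; apply => y z /Fadj; apply: D_lip => //; lia.
Qed.

Lemma card_V : 0 < k -> #|{: V}| <= (#|T| + #|T| * #|T|) * k.
Proof.
move=> k0; apply: leq_trans (leq_card (T' := (T + T * T * 'I_k)%type) val val_inj) _.
rewrite card_sum !card_prod card_ord mulnDl leq_add2r.
by rewrite leq_pmulr.
Qed.

Lemma growth_total r : growth (@sd_adj T e k) r <= #|{: V}|.
Proof. by apply: growth_le => S F _ _; exact: max_card. Qed.


Lemma no_inr (y : V) : k = 1 -> exists x0, val y = inl x0.
Proof.
move=> k1; case: y => [[x0|[[a b] j]] vy]; first by exists x0.
by move: vy => /= /andP[_]; have := ltn_ord j; lia.
Qed.

Lemma adj1 (x z : V) x0 z0 : k = 1 -> val x = inl x0 -> val z = inl z0 ->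
  sd_adj x z -> e x0 z0.
Proof.
move=> k1 Ex Ez /existsP[u' /existsP[v' /andP[Huv H]]].
move: H; rewrite Ex Ez.
case Px: (sd_pos u' v' (inl x0)) => [p|] //; case Pz: (sd_pos u' v' (inl z0)) => [q|] // H.
have euv := sd_edge_e Huv.
case/pos_inl: Px => [][? ?]; case/pos_inl: Pz => [][? ?]; subst => //; try lia.
exact: e_sym.
Qed.

Lemma growth_one r : k = 1 -> max_degree e = 1 -> growth (@sd_adj T e k) r <= 2.
Proof.
move=> k1 HD; apply: growth_le => S F Hsub /centre_reach[c cS Hc].
have degle w : degree e w <= 1 by rewrite -HD; exact: (leq_bigmax (F := degree e) w).
have [c0 Ec] := no_inr c k1.
pose P := [pred y : V | match val y with inl x => (x == c0) || e c0 x | inr _ => false end].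
have clos : forall x z, (x, z) \in F -> P x -> P z.
  move=> x z /(subgraph_edge Hsub) Hxz.
  have [x0 Ex] := no_inr x k1; have [z0 Ez] := no_inr z k1.
  have exz := adj1 k1 Ex Ez Hxz.
  rewrite /P /= Ex Ez; case/orP => [/eqP <-|ecx]; first by rewrite exz orbT.
  have [->|nz] := eqVneq z0 c0; first by [].
  exfalso; have := degle x0; rewrite /degree.
  have sub : [set c0; z0] \subset [set t | e x0 t].
    by apply/subsetP => t; rewrite !inE => /orP[] /eqP ->; [apply: e_sym|].
  have := subset_leq_card sub; rewrite cards2 eq_sym nz; lia.
have SP : S \subset [set y | P y].
  apply/subsetP => x xS; rewrite inE.
  by apply: (reach_closed clos (Hc x xS)); rewrite /P /= Ec eqxx.
apply: leq_trans (subset_leq_card SP) _.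
pose h (y : V) : T := match val y with inl x => x | inr _ => c0 end.
have hinj : injective h.
  move=> y1 y2; have [a1 E1] := no_inr y1 k1; have [a2 E2] := no_inr y2 k1.
  by rewrite /h E1 E2 => E; apply: val_inj; rewrite E1 E2 E.
rewrite -(card_imset _ hinj).
have sub : h @: [set y | P y] \subset c0 |: [set t | e c0 t].
  apply/subsetP => x /imsetP[y Hy ->]; move: Hy; rewrite inE /P /h /=.
  by have [a E] := no_inr y k1; rewrite E !inE.
apply: leq_trans (subset_leq_card sub) _.
rewrite cardsU1; have := degle c0; rewrite /degree; case: (_ \notin _); lia.
Qed.

End Sd.

Local Open Scope ring_scope.

Theorem theorem19 (R : realType) (Delta : nat) (f : nat -> R) :
  (0 < Delta)%N ->
  superlinear f ->
  (forall r : nat, (0 < r)%N -> (Delta * r + 1)%N%:R <= f r) ->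
  forall (T : finType) (e : rel T),
    simple_graph e -> max_degree e = Delta ->
    exists k : nat, (0 < k)%N /\
      forall r : nat, (0 < r)%N ->
        (growth (@sd_adj T e k) r)%:R <= f r.
Proof.
move=> D0 Hsl Hf T e Hs HD.
have [D1|D2] : (Delta = 1 \/ 2 <= Delta)%N by lia.
  exists 1%N; split => // r r0; apply: le_trans (Hf r r0); rewrite ler_nat.
  apply: leq_trans (growth_one Hs r erefl _) _; first by rewrite HD D1.
  by rewrite D1; lia.
set C := (#|T| + #|T| * #|T|)%N.
have [N HN] := Hsl (2 * C)%:R.
exists (2 * N).+1; split => // r r0.
have [small|big] := ltnP (2 * r) (2 * N).+1.
  apply: le_trans (Hf r r0); rewrite ler_nat. by have := growth_small Hs r0 small HD D2.
have rN : (N <= r)%N by lia.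
have := HN r rN r0; rewrite ler_pdivlMr ?ltr0n // => H.
apply: le_trans H; rewrite -natrM ler_nat.
apply: leq_trans (growth_total _ _ _) _; apply: leq_trans (card_V _ _) _ => //.
rewrite -/C; nia.
Qed.
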